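(* Let $\mathcal K$ be a finitely complete 2-category with a good yoneda structure. Let $C$ be small, $i:M\to\mathcal PC$ and $f:C\to A$ with $M$ and $f$ admissible, and let $p:y_C/i\to C$, $q:y_C/i\to M$, $\lambda:y_Cp\Rightarrow iq$ be the lax pullback of $y_C$ and $i$. Let $k:M\to A$, let $\eta:i\Rightarrow A(f,1)k$ be a 2-cell and $\eta':fp\Rightarrow kq$ the corresponding 2-cell, i.e. the unique one with $(A(f,1)\eta')\cdot(\chi^fp)=(\eta q)\cdot\lambda$. Then: (1) $\eta$ exhibits $k$ as a left lifting of $i$ along $A(f,1)$ iff $\eta'$ exhibits $k$ as a left extension of $fp$ along $q$; (2) $\eta$ exhibits $k$ as an absolute left lifting of $i$ along $A(f,1)$ iff $\eta'$ exhibits $k$ as a pointwise left extension of $fp$ along $q$.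
   Context: For $f:A\to B$, $g:C\to B$ the lax pullback $f/g$ has projections $p:f/g\to A$, $q:f/g\to C$ and universal 2-cell $\lambda:fp\Rightarrow gq$. Given $f:A\to C$, $g:A\to B$, $h:B\to C$, a 2-cell $\phi:f\Rightarrow hg$ exhibits $h$ as a left extension of $f$ along $g$ if for every $k:B\to C$, $\kappa\mapsto(\kappa g)\cdot\phi$ is a bijection from 2-cells $h\Rightarrow k$ to 2-cells $f\Rightarrow kg$; it exhibits $g$ as a left lifting of $f$ along (through) $h$ if for every $k:A\to B$, $\kappa\mapsto(h\kappa)\cdot\phi$ is a bijection from 2-cells $g\Rightarrow k$ to 2-cells $f\Rightarrow hk$; the lifting is absolute if $\phi j$ exhibits $gj$ as a left lifting of $fj$ along $h$ for all $j:D\to A$. $\phi$ exhibits $h$ as a pointwise left extension of $f$ along $g$ if for every $c:X\to B$, with lax pullback $p:g/c\to A$, $q:g/c\to X$, $\lambda:gp\Rightarrow cq$, $(h\lambda)\cdot(\phi p)$ exhibits $hc$ as a left extension of $fp$ along $q$. A good yoneda structure: a class of admissible 1-cells with $fg$ admissible whenever $f$ is; $A$ admissible when $1_A$ is; for admissible $A$ an object $\mathcal PA$ and admissible $y_A:A\to\mathcal PA$; for $f:A\to B$ with $A$, $f$ admissible a 1-cell $B(f,1):B\to\mathcal PA$ and 2-cell $\chi^f:y_A\Rightarrow B(f,1)f$; such that (i) $\chi^f$ exhibits $f$ as an absolute left lifting of $y_A$ through $B(f,1)$; (ii) if $A$, $f:A\to B$ admissible and $\psi:y_A\Rightarrow gf$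 exhibits $f$ as an absolute left lifting of $y_A$ along $g$, then $\psi$ exhibits $g$ as a pointwise left extension of $y_A$ along $f$. $C$ is small if $C$ and $\mathcal PC$ are admissible. In this setting $\lambda$ exhibits $i$ as a left extension of $y_Cp$ along $q$ and $\chi^f$ is a left lifting, so the defining equation gives a bijection $\eta\mapsto\eta'$ between 2-cells $i\Rightarrow A(f,1)k$ and 2-cells $fp\Rightarrow kq$. *)

(* Defs.v *)
(* strict 2-categories presented essentially-algebraically
   (objects, 1-cells, 2-cells as plain types with source/target maps and
   total composition operations whose axioms hold on composable pairs). *)

Set Implicit Arguments.

Record TwoCat := {
  Ob : Type;
  Mor : Type;
  Cell : Type;
  dom : Mor -> Ob;
  cod : Mor -> Ob;
  src : Cell -> Mor;
  tgt : Cell -> Mor;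
  idm : Ob -> Mor;
  comp : Mor -> Mor -> Mor;          (* comp g f = g o f *)
  idc : Mor -> Cell;
  vcomp : Cell -> Cell -> Cell;      (* vcomp b a = b . a (vertical) *)
  hcomp : Cell -> Cell -> Cell;      (* hcomp b a = b * a (horizontal) *)
  dom_idm : forall A, dom (idm A) = A;
  cod_idm : forall A, cod (idm A) = A;
  dom_comp : forall f g, cod f = dom g -> dom (comp g f) = dom f;
  cod_comp : forall f g, cod f = dom g -> cod (comp g f) = cod g;
  comp_idl : forall f, comp (idm (cod f)) f = f;
  comp_idr : forall f, comp f (idm (dom f)) = f;
  comp_assoc : forall f g h, cod f = dom g -> cod g = dom h ->
      comp h (comp g f) = comp (comp h g) f;
  dom_par : forall a, dom (src a) = dom (tgt a);
  cod_par : forall a, cod (src a) = cod (tgt a);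
  src_idc : forall f, src (idc f) = f;
  tgt_idc : forall f, tgt (idc f) = f;
  src_vcomp : forall a b, tgt a = src b -> src (vcomp b a) = src a;
  tgt_vcomp : forall a b, tgt a = src b -> tgt (vcomp b a) = tgt b;
  src_hcomp : forall a b, cod (src a) = dom (src b) ->
      src (hcomp b a) = comp (src b) (src a);
  tgt_hcomp : forall a b, cod (src a) = dom (src b) ->
      tgt (hcomp b a) = comp (tgt b) (tgt a);
  vcomp_idl : forall a, vcomp (idc (tgt a)) a = a;
  vcomp_idr : forall a, vcomp a (idc (src a)) = a;
  vcomp_assoc : forall a b c, tgt a = src b -> tgt b = src c ->
      vcomp c (vcomp b a) = vcomp (vcomp c b) a;
  hcomp_idl : forall a, hcomp (idc (idm (cod (src a)))) a = a;
  hcomp_idr : forall a, hcomp a (idc (idm (dom (src a)))) = a;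
  hcomp_assoc : forall a b c, cod (src a) = dom (src b) ->
      cod (src b) = dom (src c) ->
      hcomp c (hcomp b a) = hcomp (hcomp c b) a;
  hcomp_idc : forall f g, cod f = dom g -> hcomp (idc g) (idc f) = idc (comp g f);
  interchange : forall a a' b b', tgt a = src a' -> tgt b = src b' ->
      cod (src a) = dom (src b) ->
      hcomp (vcomp b' b) (vcomp a' a) = vcomp (hcomp b' a') (hcomp b a)
}.

Arguments dom {K} f : rename.
Arguments cod {K} f : rename.
Arguments src {K} a : rename.
Arguments tgt {K} a : rename.
Arguments idm {K} A : rename.
Arguments comp {K} g f : rename.
Arguments idc {K} f : rename.
Arguments vcomp {K} b a : rename.
Arguments hcomp {K} b a : rename.

Section TwoCatDefs.
Variable K : TwoCat.

Definition is1cell (f : Mor K) (A B : Ob K) : Prop := dom f = A /\ cod f = B.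
Definition is2cell (a : Cell K) (f g : Mor K) : Prop := src a = f /\ tgt a = g.

Definition whiskerL (g : Mor K) (a : Cell K) : Cell K := hcomp (idc g) a.
Definition whiskerR (a : Cell K) (f : Mor K) : Cell K := hcomp a (idc f).

(* f : A -> C, g : A -> B, h : B -> C, phi : f => h g.
   phi exhibits h as a left extension of f along g. *)
Definition LeftExt (f g h : Mor K) (phi : Cell K) : Prop :=
  forall k : Mor K, is1cell k (cod g) (cod h) ->
  forall b : Cell K, is2cell b f (comp k g) ->
  exists! kap : Cell K, is2cell kap h k /\ vcomp (whiskerR kap g) phi = b.

Definition LeftLift (f g h : Mor K) (phi : Cell K) : Prop :=
  forall k : Mor K, is1cell k (dom g) (cod g) ->
  forall b : Cell K, is2cell b f (comp h k) ->
  exists! kap : Cell K, is2cell kap g k /\ vcomp (whiskerL h kap) phi = b.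

Definition AbsLeftLift (f g h : Mor K) (phi : Cell K) : Prop :=
  forall j : Mor K, cod j = dom g ->
  LeftLift (comp f j) (comp g j) h (whiskerR phi j).

Definition is_comma (f g : Mor K) (P : Ob K) (p q : Mor K) (lam : Cell K) : Prop :=
  cod f = cod g /\
  is1cell p P (dom f) /\ is1cell q P (dom g) /\
  is2cell lam (comp f p) (comp g q) /\
  (forall (X : Ob K) (a c : Mor K) (th : Cell K),
     is1cell a X (dom f) -> is1cell c X (dom g) ->
     is2cell th (comp f a) (comp g c) ->
     exists! u : Mor K, is1cell u X P /\ comp p u = a /\ comp q u = c /\
                        whiskerR lam u = th) /\
  (forall (X : Ob K) (u v : Mor K) (al be : Cell K),
     is1cell u X P -> is1cell v X P ->
     is2cell al (comp p u) (comp p v) -> is2cell be (comp q u) (comp q v) ->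
     vcomp (whiskerL g be) (whiskerR lam u) = vcomp (whiskerR lam v) (whiskerL f al) ->
     exists! ga : Cell K, is2cell ga u v /\ whiskerL p ga = al /\ whiskerL q ga = be).

Definition is_pullback (f g : Mor K) (P : Ob K) (p q : Mor K) : Prop :=
  cod f = cod g /\
  is1cell p P (dom f) /\ is1cell q P (dom g) /\ comp f p = comp g q /\
  (forall (X : Ob K) (a c : Mor K),
     is1cell a X (dom f) -> is1cell c X (dom g) -> comp f a = comp g c ->
     exists! u : Mor K, is1cell u X P /\ comp p u = a /\ comp q u = c) /\
  (forall (X : Ob K) (u v : Mor K) (al be : Cell K),
     is1cell u X P -> is1cell v X P ->
     is2cell al (comp p u) (comp p v) -> is2cell be (comp q u) (comp q v) ->
     whiskerL f al = whiskerL g be ->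
     exists! ga : Cell K, is2cell ga u v /\ whiskerL p ga = al /\ whiskerL q ga = be).

Definition is_terminal (T : Ob K) : Prop :=
  (forall X : Ob K, exists! t : Mor K, is1cell t X T) /\
  (forall (X : Ob K) (t t' : Mor K), is1cell t X T -> is1cell t' X T ->
     exists! a : Cell K, is2cell a t t').

(* Finite completeness: terminal object, pullbacks and comma objects
   (these generate all finite weighted 2-limits). *)
Definition finitely_complete : Prop :=
  (exists T : Ob K, is_terminal T) /\
  (forall f g : Mor K, cod f = cod g ->
     exists P p q, is_pullback f g P p q) /\
  (forall f g : Mor K, cod f = cod g ->
     exists P p q lam, is_comma f g P p q lam).

Definition PointwiseLeftExt (f g h : Mor K) (phi : Cell K) : Prop :=
  forall (X : Ob K) (c : Mor K), is1cell c X (cod g) ->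
  forall (P : Ob K) (p q : Mor K) (lam : Cell K), is_comma g c P p q lam ->
  LeftExt (comp f p) q (comp h c) (vcomp (whiskerL h lam) (whiskerR phi p)).

End TwoCatDefs.

Arguments is1cell {K} f A B.
Arguments is2cell {K} a f g.
Arguments whiskerL {K} g a.
Arguments whiskerR {K} a f.
Arguments LeftExt {K} f g h phi.
Arguments LeftLift {K} f g h phi.
Arguments AbsLeftLift {K} f g h phi.
Arguments is_comma {K} f g P p q lam.
Arguments is_pullback {K} f g P p q.
Arguments is_terminal {K} T.
Arguments PointwiseLeftExt {K} f g h phi.

Record GoodYoneda (K : TwoCat) := {
  adm : Mor K -> Prop;
  adm_comp : forall f g : Mor K, cod g = dom f -> adm f -> adm (comp f g);
  PP : Ob K -> Ob K;
  yon : Ob K -> Mor K;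
  yon_typ : forall A, adm (idm A) -> is1cell (yon A) A (PP A);
  yon_adm : forall A, adm (idm A) -> adm (yon A);
  res : Mor K -> Mor K;
  chi : Mor K -> Cell K;
  res_typ : forall f, adm (idm (dom f)) -> adm f ->
      is1cell (res f) (cod f) (PP (dom f));
  chi_typ : forall f, adm (idm (dom f)) -> adm f ->
      is2cell (chi f) (yon (dom f)) (comp (res f) f);
  yoneda_i : forall f, adm (idm (dom f)) -> adm f ->
      AbsLeftLift (yon (dom f)) f (res f) (chi f);
  yoneda_ii : forall (f g : Mor K) (psi : Cell K),
      adm (idm (dom f)) -> adm f ->
      is1cell g (cod f) (PP (dom f)) ->
      is2cell psi (yon (dom f)) (comp g f) ->
      AbsLeftLift (yon (dom f)) f g psi ->
      PointwiseLeftExt (yon (dom f)) f g psi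
}.

Arguments adm {K} _ _.
Arguments PP {K} _ _.
Arguments yon {K} _ _.
Arguments res {K} _ _.
Arguments chi {K} _ _.

Definition adm_ob {K : TwoCat} (Y : GoodYoneda K) (A : Ob K) : Prop := adm Y (idm A).

Definition small {K : TwoCat} (Y : GoodYoneda K) (C : Ob K) : Prop :=
  adm_ob Y C /\ adm_ob Y (PP Y C).

(* Main.v *)
Require Import Defs.
From Stdlib Require Import Setoid.

Section Basics.
Context {K : TwoCat}.
Implicit Types (f g h : Mor K) (a b c : Cell K).

Lemma t_idm (A : Ob K) : is1cell (idm A) A A.
Proof. split; [apply dom_idm|apply cod_idm]. Qed.
Lemma t_comp f g A B C : is1cell f A B -> is1cell g B C -> is1cell (comp g f) A C.
Proof. intros [H1 H2] [H3 H4]. split. rewrite dom_comp; congruence. rewrite cod_comp; congruence. Qed.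
Lemma t_idc f : is2cell (idc f) f f.
Proof. split; [apply src_idc|apply tgt_idc]. Qed.
Lemma t_vcomp a b f g h : is2cell a f g -> is2cell b g h -> is2cell (vcomp b a) f h.
Proof. intros [H1 H2] [H3 H4]. split. rewrite src_vcomp; congruence. rewrite tgt_vcomp; congruence. Qed.
Lemma t_wL a h f g A B C : is2cell a f g -> is1cell f A B -> is1cell h B C ->
  is2cell (whiskerL h a) (comp h f) (comp h g).
Proof. intros [H1 H2] [H3 H4] [H5 H6]. unfold whiskerL. split.
 rewrite src_hcomp; rewrite ?src_idc; congruence.
 rewrite tgt_hcomp; rewrite ?src_idc, ?tgt_idc; congruence. Qed.
Lemma t_wR a h f g A B C : is2cell a f g -> is1cell f B C -> is1cell h A B ->
  is2cell (whiskerR a h) (comp f h) (comp g h).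
Proof. intros [H1 H2] [H3 H4] [H5 H6]. unfold whiskerR. split.
 rewrite src_hcomp; rewrite ?src_idc; congruence.
 rewrite tgt_hcomp; rewrite ?src_idc, ?tgt_idc; congruence. Qed.
Lemma t_tgt a f g A B : is2cell a f g -> is1cell f A B -> is1cell g A B.
Proof. intros [H1 H2] [H3 H4]. split.
 rewrite <- H2, <- dom_par; congruence. rewrite <- H2, <- cod_par; congruence. Qed.
Lemma t_conv a f g f' g' : is2cell a f g -> f = f' -> g = g' -> is2cell a f' g'.
Proof. intros H -> ->; exact H. Qed.

Lemma E_assoc f g h A B C D : is1cell f A B -> is1cell g B C -> is1cell h C D ->
  comp h (comp g f) = comp (comp h g) f.
Proof. intros [] [] []. apply comp_assoc; congruence. Qed.
Lemma E_idl f A B : is1cell f A B -> comp (idm B) f = f.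
Proof. intros [H1 H2]. rewrite <- H2. apply comp_idl. Qed.
Lemma E_idr f A B : is1cell f A B -> comp f (idm A) = f.
Proof. intros [H1 H2]. rewrite <- H1. apply comp_idr. Qed.
Lemma E_vidl a f g : is2cell a f g -> vcomp (idc g) a = a.
Proof. intros [H1 H2]. rewrite <- H2. apply vcomp_idl. Qed.
Lemma E_vidr a f g : is2cell a f g -> vcomp a (idc f) = a.
Proof. intros [H1 H2]. rewrite <- H1. apply vcomp_idr. Qed.
Lemma E_vassoc a b c f g h l : is2cell a f g -> is2cell b g h -> is2cell c h l ->
  vcomp c (vcomp b a) = vcomp (vcomp c b) a.
Proof. intros [] [] []. apply vcomp_assoc; congruence. Qed.

Lemma W_vL h a b f g g' A B C : is1cell f A B -> is2cell a f g -> is2cell b g g' ->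
  is1cell h B C -> whiskerL h (vcomp b a) = vcomp (whiskerL h b) (whiskerL h a).
Proof. intros [H1 H2] [H3 H4] [H5 H6] [H7 H8]. unfold whiskerL.
  rewrite <- (vcomp_idl _ (idc h)) at 1. rewrite tgt_idc.
  apply interchange; rewrite ?src_idc, ?tgt_idc; congruence. Qed.
Lemma W_vR h a b f g g' A B C : is1cell f B C -> is2cell a f g -> is2cell b g g' ->
  is1cell h A B -> whiskerR (vcomp b a) h = vcomp (whiskerR b h) (whiskerR a h).
Proof. intros [H1 H2] [H3 H4] [H5 H6] [H7 H8]. unfold whiskerR.
  rewrite <- (vcomp_idl _ (idc h)) at 1. rewrite tgt_idc.
  apply interchange; rewrite ?src_idc, ?tgt_idc; congruence. Qed.
Lemma W_LL g h a f f' A B C D : is2cell a f f' -> is1cell f A B -> is1cell h B C -> is1cell g C D ->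
  whiskerL g (whiskerL h a) = whiskerL (comp g h) a.
Proof. intros [H1 H2] [H3 H4] [H5 H6] [H7 H8]. unfold whiskerL.
  rewrite hcomp_assoc; rewrite ?src_idc; try congruence.
  rewrite hcomp_idc; congruence. Qed.
Lemma W_RR a f g h h' A B C D : is2cell a h h' -> is1cell h C D -> is1cell f B C -> is1cell g A B ->
  whiskerR (whiskerR a f) g = whiskerR a (comp f g).
Proof. intros [H1 H2] [H3 H4] [H5 H6] [H7 H8]. unfold whiskerR.
  rewrite <- hcomp_assoc; rewrite ?src_idc; try congruence.
  rewrite hcomp_idc; congruence. Qed.
Lemma W_LR h a g f f' A B C D : is2cell a f f' -> is1cell f B C -> is1cell h C D -> is1cell g A B ->
  whiskerR (whiskerL h a) g = whiskerL h (whiskerR a g).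
Proof. intros [H1 H2] [H3 H4] [H5 H6] [H7 H8]. unfold whiskerR, whiskerL.
  rewrite hcomp_assoc; rewrite ?src_idc; congruence. Qed.
Lemma W_Lid h f A B C : is1cell f A B -> is1cell h B C -> whiskerL h (idc f) = idc (comp h f).
Proof. intros [] []. apply hcomp_idc; congruence. Qed.
Lemma W_Rid h f A B C : is1cell f B C -> is1cell h A B -> whiskerR (idc f) h = idc (comp f h).
Proof. intros [] []. apply hcomp_idc; congruence. Qed.
Lemma W_Lidm a f g A B : is2cell a f g -> is1cell f A B -> whiskerL (idm B) a = a.
Proof. intros [H1 H2] [H3 H4]. unfold whiskerL. rewrite <- H4, <- H1. apply hcomp_idl. Qed.
Lemma W_Ridm a f g A B : is2cell a f g -> is1cell f A B -> whiskerR a (idm A) = a.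
Proof. intros [H1 H2] [H3 H4]. unfold whiskerR. rewrite <- H3, <- H1. apply hcomp_idr. Qed.
Lemma Exch a b f f' g g' A B C : is2cell a f f' -> is1cell f A B -> is2cell b g g' -> is1cell g B C ->
  vcomp (whiskerL g' a) (whiskerR b f) = vcomp (whiskerR b f') (whiskerL g a).
Proof. intros [H1 H2] [H3 H4] [H5 H6] [H7 H8]. unfold whiskerL, whiskerR.
  rewrite <- interchange; rewrite ?src_idc, ?tgt_idc; try congruence.
  rewrite <- interchange; rewrite ?src_idc, ?tgt_idc; try congruence.
  rewrite <- H6, <- H1, vcomp_idl, vcomp_idr, <- H5, <- H2, vcomp_idr, vcomp_idl.
  reflexivity. Qed.
End Basics.

Create HintDb tc.
Global Hint Resolve t_idm t_comp t_idc t_vcomp t_wL t_wR : tc.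
Ltac tc := eauto 10 with tc.

Section Star.
Context {K : TwoCat}.

Lemma Kill (b sg : Cell K) (F G s : Mor K) (P Z : Ob K) :
  is2cell b F G -> is1cell F P Z -> is2cell sg (idm P) s -> is1cell s P P ->
  whiskerL F sg = idc F -> whiskerL G sg = idc G -> whiskerR b s = b.
Proof.
  intros Hb HF Hs Hs1 E1 E2.
  assert (HG : is1cell G P Z) by (eapply t_tgt; eauto).
  pose proof (Exch sg b (idm P) s F G P P Z Hs (t_idm _) Hb HF) as E.
  rewrite E1, E2 in E.
  rewrite (W_Ridm b F G P Z Hb HF) in E.
  rewrite (E_vidl b F G Hb) in E.
  assert (HF' : comp F s = F).
  { pose proof (t_wL sg F (idm P) s P P Z Hs (t_idm _) HF) as T. rewrite E1 in T.
    destruct T as [_ T]. rewrite tgt_idc in T. auto. }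
  assert (T : is2cell (whiskerR b s) F (comp G s)).
  { eapply t_conv. eapply t_wR; eauto. auto. auto. }
  rewrite (E_vidr _ _ _ T) in E. auto.
Qed.

Lemma Star (y i c p q p' q' : Mor K) (lam lam' : Cell K) (C Z M X P P' : Ob K) :
  is1cell y C Z -> is1cell i M Z -> is1cell c X M ->
  (exists P'' p'' q'' lam'', is_comma y (comp i c) P'' p'' q'' lam'') ->
  (forall P'' p'' q'' lam'', is_comma y (comp i c) P'' p'' q'' lam'' ->
       LeftExt (comp y p'') q'' (comp i c) lam'') ->
  is_comma y i P p q lam -> is_comma q c P' p' q' lam' ->
  LeftExt (comp y (comp p p')) q' (comp i c) (vcomp (whiskerL i lam') (whiskerR lam p')).
Proof.
  intros Hy Hi Hc [P'' [p'' [q'' [lam'' Hcm'']]]] HY3 Hcm Hcm'.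
  pose proof (HY3 _ _ _ _ Hcm'') as LE.
  destruct Hcm as [_ [Hp [Hq [Hlam [U1 U2]]]]].
  destruct Hcm' as [_ [Hp' [Hq' [Hlam' [U1' U2']]]]].
  destruct Hcm'' as [_ [Hp'' [Hq'' [Hlam'' [U1'' U2'']]]]].
  destruct Hy as [Hy1 Hy2]. destruct Hi as [Hi1 Hi2]. destruct Hc as [Hc1 Hc2].
  try rewrite Hy1 in *; try rewrite Hi1 in *; try rewrite Hc1 in *.
  destruct Hq as [Hq1 Hq2]. try rewrite Hq2 in *; try rewrite Hq1 in *. assert (Hq : is1cell q P M) by (split; auto).
  assert (Hic : is1cell (comp i c) X Z) by (eapply t_comp; split; eauto).
  destruct Hic as [Hic1 Hic2]. try rewrite Hic1 in *; try rewrite Hic2 in *.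
  assert (Hy : is1cell y C Z) by (split; auto).
  assert (Hi : is1cell i M Z) by (split; auto).
  assert (Hc : is1cell c X M) by (split; auto).
  assert (Hic : is1cell (comp i c) X Z) by tc.
  clear Hy1 Hy2 Hi1 Hi2 Hc1 Hc2 Hq1 Hq2 Hic1 Hic2.
  intros g Hg b Hb.
  destruct Hq' as [Hq'1 Hq'2]. rewrite Hq'2 in Hg. assert (Hq' : is1cell q' P' X) by (split; auto).
  destruct Hg as [Hg1 Hg2]. destruct Hic as [Hic1 Hic2]. rewrite Hic2 in Hg2.
  assert (Hg : is1cell g X Z) by (split; auto). assert (Hic : is1cell (comp i c) X Z) by (split; auto).
  clear Hg1 Hg2 Hq'1 Hq'2 Hic1 Hic2.
  assert (Hlam''a : is2cell lam'' (comp y p'') (comp i (comp c q''))).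
  { eapply t_conv; [exact Hlam''|reflexivity|]. symmetry. eapply E_assoc; eauto. }
  destruct (U1 P'' p'' (comp c q'') lam'' Hp'' ltac:(tc) Hlam''a) as [w [[Hw [Hpw [Hqw Hlw]]] _]].
  assert (Hidv : is2cell (idc (comp c q'')) (comp q w) (comp c q'')).
  { rewrite Hqw. apply t_idc. }
  destruct (U1' P'' w q'' _ Hw Hq'' Hidv) as [v [[Hv [Hp'v [Hq'v Hl'v]]] _]].
  set (L := vcomp (whiskerL i lam') (whiskerR lam p')).
  assert (HL : is2cell L (comp y (comp p p')) (comp (comp i c) q')).
  { unfold L. eapply t_vcomp.
    - eapply t_conv; [eapply t_wR; [exact Hlam| tc | exact Hp'] | |].
      + symmetry; eapply E_assoc; eauto.
      + symmetry; eapply E_assoc; eauto.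
    - eapply t_conv; [eapply t_wL; [exact Hlam'| tc | exact Hi] | |].
      + reflexivity.
      + eapply E_assoc; eauto. }
  destruct (U1'' P' (comp p p') q' L ltac:(tc) Hq' HL) as [u [[Hu [Hp''u [Hq''u Hl''u]]] _]].
  assert (Hwu : is1cell (comp w u) P' P) by tc.
  assert (Ha1 : is2cell (idc (comp p p')) (comp p p') (comp p (comp w u))).
  { rewrite (E_assoc u w p P' P'' P C Hu Hw Hp), Hpw, Hp''u. apply t_idc. }
  assert (Ha2 : is2cell lam' (comp q p') (comp q (comp w u))).
  { rewrite (E_assoc u w q P' P'' P M Hu Hw Hq), Hqw.
    rewrite <- (E_assoc u q'' c P' P'' X M Hu Hq'' Hc), Hq''u. exact Hlam'. }
  destruct (U2 P' p' (comp w u) _ _ Hp' Hwu Ha1 Ha2) as [al [[Hal [Hpal Hqal]] _]].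
  { rewrite <- (W_RR lam w u (comp y p) (comp i q) P' P'' P Z Hlam ltac:(tc) Hw Hu).
    rewrite Hlw, Hl''u. rewrite (W_Lid y (comp p p') P' C Z ltac:(tc) Hy).
    fold L. symmetry. eapply E_vidr. exact HL. }
  assert (Hvu : is1cell (comp v u) P' P') by tc.
  assert (Hs1 : is2cell al (comp p' (idm P')) (comp p' (comp v u))).
  { rewrite (E_idr p' P' P Hp'), (E_assoc u v p' P' P'' P' P Hu Hv Hp'), Hp'v. exact Hal. }
  assert (Hs2 : is2cell (idc q') (comp q' (idm P')) (comp q' (comp v u))).
  { rewrite (E_idr q' P' X Hq'), (E_assoc u v q' P' P'' P' X Hu Hv Hq'), Hq'v, Hq''u. apply t_idc. }
  destruct (U2' P' (idm P') (comp v u) _ _ (t_idm _) Hvu Hs1 Hs2) as [sg [[Hsg [Hp'sg Hq'sg]] _]].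
  { rewrite (W_Lid c q' P' X M Hq' Hc), (W_Ridm lam' _ _ P' M Hlam' ltac:(tc)), (E_vidl _ _ _ Hlam').
    rewrite <- (W_RR lam' v u (comp q p') (comp c q') P' P'' P' M Hlam' ltac:(tc) Hv Hu).
    rewrite Hl'v, (W_Rid u (comp c q'') P' P'' M ltac:(tc) Hu).
    rewrite <- (E_assoc u q'' c P' P'' X M Hu Hq'' Hc), Hq''u, Hqal.
    symmetry. eapply E_vidl. exact Hlam'. }
  assert (Hbv : is2cell (whiskerR b v) (comp y p'') (comp g q'')).
  { eapply t_conv; [eapply t_wR; [exact Hb| tc| exact Hv]| |].
    - rewrite <- (E_assoc v (comp p p') y P'' P' C Z Hv ltac:(tc) Hy).
      rewrite <- (E_assoc v p' p P'' P' P C Hv Hp' Hp), Hp'v, Hpw. reflexivity.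
    - rewrite <- (E_assoc v q' g P'' P' X Z Hv Hq' Hg), Hq'v. reflexivity. }
  assert (HgX : is1cell g (cod q'') (cod (comp i c))).
  { destruct Hq'' as [_ ->]. destruct Hic as [_ ->]. exact Hg. }
  destruct (LE g HgX (whiskerR b v) Hbv) as [kap [[Hkap Hkeq] Huq]].
  assert (Hkq'' : is2cell (whiskerR kap q'') (comp (comp i c) q'') (comp g q'')) by tc.
  exists kap. split. split. exact Hkap.
  - rewrite <- Hq''u.
    rewrite <- (W_RR kap q'' u (comp i c) g P' P'' X Z Hkap Hic Hq'' Hu).
    rewrite <- Hl''u.
    rewrite <- (W_vR u lam'' (whiskerR kap q'') (comp y p'') _ _ P' P'' Z ltac:(tc) Hlam'' Hkq'' Hu).
    rewrite Hkeq.
    rewrite (W_RR b v u (comp y (comp p p')) (comp g q') P' P'' P' Z Hb ltac:(tc) Hv Hu).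
    apply (Kill b sg (comp y (comp p p')) (comp g q') (comp v u) P' Z Hb ltac:(tc) Hsg Hvu).
    + rewrite <- (W_LL y (comp p p') sg (idm P') (comp v u) P' P' C Z Hsg (t_idm _) ltac:(tc) Hy).
      rewrite <- (W_LL p p' sg (idm P') (comp v u) P' P' P C Hsg (t_idm _) Hp' Hp).
      rewrite Hp'sg, Hpal. apply (W_Lid y (comp p p') P' C Z ltac:(tc) Hy).
    + rewrite <- (W_LL g q' sg (idm P') (comp v u) P' P' X Z Hsg (t_idm _) Hq' Hg).
      rewrite Hq'sg. apply (W_Lid g q' P' X Z Hq' Hg).
  - intros kap1 [Hkap1 Heq1]. apply Huq. split. exact Hkap1.
    assert (Hk1q' : is2cell (whiskerR kap1 q') (comp (comp i c) q') (comp g q')) by tc.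
    rewrite <- Heq1.
    rewrite (W_vR v L (whiskerR kap1 q') (comp y (comp p p')) _ _ P'' P' Z ltac:(tc) HL Hk1q' Hv).
    rewrite (W_RR kap1 q' v (comp i c) g P'' P' X Z Hkap1 Hic Hq' Hv), Hq'v.
    f_equal. unfold L.
    assert (Hlp : is2cell (whiskerR lam p') (comp (comp y p) p') (comp i (comp q p'))).
    { eapply t_conv; [eapply t_wR; [exact Hlam| tc| exact Hp']| reflexivity |].
      symmetry. eapply E_assoc; eauto. }
    assert (Hil : is2cell (whiskerL i lam') (comp i (comp q p')) (comp i (comp c q'))) by tc.
    rewrite (W_vR v (whiskerR lam p') (whiskerL i lam') (comp (comp y p) p') (comp i (comp q p')) (comp i (comp c q')) P'' P' Z ltac:(tc) Hlp Hil Hv).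
    rewrite (W_LR i lam' v (comp q p') (comp c q') P'' P' M Z Hlam' ltac:(tc) Hi Hv), Hl'v.
    rewrite (W_Lid i (comp c q'') P'' M Z ltac:(tc) Hi).
    rewrite (W_RR lam p' v (comp y p) (comp i q) P'' P' P Z Hlam ltac:(tc) Hp' Hv), Hp'v, Hlw.
    symmetry. eapply E_vidl. exact Hlam''a.
Qed.
End Star.

Section Gen.
Context {K : TwoCat}.
Variables (y r f i0 k0 pp qq : Mor K) (chi : Cell K) (lam0 eta0 eta0' : Cell K) (C Z A X Q : Ob K).
Hypothesis Hy : is1cell y C Z.
Hypothesis Hr : is1cell r A Z.
Hypothesis Hf : is1cell f C A.
Hypothesis Hchi : is2cell chi y (comp r f).
Hypothesis Y1 : forall j D, is1cell j D C -> LeftLift (comp y j) (comp f j) r (whiskerR chi j).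
Hypothesis Hi0 : is1cell i0 X Z.
Hypothesis Hk0 : is1cell k0 X A.
Hypothesis Hpp : is1cell pp Q C.
Hypothesis Hqq : is1cell qq Q X.
Hypothesis Hlam0 : is2cell lam0 (comp y pp) (comp i0 qq).
Hypothesis LE0 : LeftExt (comp y pp) qq i0 lam0.
Hypothesis Heta0 : is2cell eta0 i0 (comp r k0).
Hypothesis Heta0' : is2cell eta0' (comp f pp) (comp k0 qq).
Hypothesis Heq : vcomp (whiskerL r eta0') (whiskerR chi pp) = vcomp (whiskerR eta0 qq) lam0.

Definition RR k' th ze := is2cell th i0 (comp r k') /\ is2cell ze (comp f pp) (comp k' qq) /\
  vcomp (whiskerL r ze) (whiskerR chi pp) = vcomp (whiskerR th qq) lam0.

Lemma Hchipp : is2cell (whiskerR chi pp) (comp y pp) (comp r (comp f pp)).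
Proof. eapply t_conv; [eapply t_wR; [exact Hchi| tc | exact Hpp] | reflexivity |].
  symmetry. eapply E_assoc; eauto. Qed.

Lemma thq k' th : is1cell k' X A -> is2cell th i0 (comp r k') ->
  is2cell (whiskerR th qq) (comp i0 qq) (comp r (comp k' qq)).
Proof. intros. eapply t_conv; [eapply t_wR; [eassumption| tc | exact Hqq] | reflexivity |].
  symmetry. eapply E_assoc; eauto. Qed.

Lemma rze k' ze : is1cell k' X A -> is2cell ze (comp f pp) (comp k' qq) ->
  is2cell (whiskerL r ze) (comp r (comp f pp)) (comp (comp r k') qq).
Proof. intros. eapply t_conv; [eapply t_wL; [eassumption| tc | exact Hr] | reflexivity |].
  eapply E_assoc; eauto. Qed.

Lemma aR k' th : is1cell k' X A -> is2cell th i0 (comp r k') -> exists ze, RR k' th ze.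
Proof.
  intros Hk Hth. pose proof (Y1 pp Q Hpp) as LL.
  assert (Hkq : is1cell (comp k' qq) (dom (comp f pp)) (cod (comp f pp))).
  { assert (T : is1cell (comp f pp) Q A) by tc. destruct T as [-> ->]. tc. }
  destruct (LL _ Hkq (vcomp (whiskerR th qq) lam0)) as [ze [[Hze E] _]].
  { eapply t_vcomp. exact Hlam0. apply thq; auto. }
  exists ze. split; [|split]; auto.
Qed.

Lemma dR k' th z1 z2 : is1cell k' X A -> RR k' th z1 -> RR k' th z2 -> z1 = z2.
Proof.
  intros Hk [Ht [Hz1 E1]] [_ [Hz2 E2]]. pose proof (Y1 pp Q Hpp) as LL.
  assert (Hkq : is1cell (comp k' qq) (dom (comp f pp)) (cod (comp f pp))).
  { assert (T : is1cell (comp f pp) Q A) by tc. destruct T as [-> ->]. tc. }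
  destruct (LL _ Hkq (vcomp (whiskerR th qq) lam0)) as [ze [_ U]].
  { eapply t_vcomp. exact Hlam0. apply thq; auto. }
  transitivity ze; [symmetry|]; apply U; auto.
Qed.

Lemma bR k' ze : is1cell k' X A -> is2cell ze (comp f pp) (comp k' qq) -> exists th, RR k' th ze.
Proof.
  intros Hk Hze.
  assert (Hrk : is1cell (comp r k') (cod qq) (cod i0)).
  { destruct Hqq as [_ ->]. destruct Hi0 as [_ ->]. tc. }
  destruct (LE0 _ Hrk (vcomp (whiskerL r ze) (whiskerR chi pp))) as [th [[Hth E] _]].
  { eapply t_vcomp. exact Hchipp. apply rze; auto. }
  exists th. split; [|split]; auto.
Qed.

Lemma cR k' t1 t2 ze : is1cell k' X A -> RR k' t1 ze -> RR k' t2 ze -> t1 = t2.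
Proof.
  intros Hk [Ht1 [Hz E1]] [Ht2 [_ E2]].
  assert (Hrk : is1cell (comp r k') (cod qq) (cod i0)).
  { destruct Hqq as [_ ->]. destruct Hi0 as [_ ->]. tc. }
  destruct (LE0 _ Hrk (vcomp (whiskerL r ze) (whiskerR chi pp))) as [th [_ U]].
  { eapply t_vcomp. exact Hchipp. apply rze; auto. }
  transitivity th; [symmetry|]; apply U; auto.
Qed.

Lemma eR k' ka : is1cell k' X A -> is2cell ka k0 k' ->
  RR k' (vcomp (whiskerL r ka) eta0) (vcomp (whiskerR ka qq) eta0').
Proof.
  intros Hk Hka. split; [|split].
  - eapply t_vcomp. exact Heta0. tc.
  - eapply t_vcomp. exact Heta0'. tc.
  - assert (T1 : is2cell (whiskerR ka qq) (comp k0 qq) (comp k' qq)) by tc.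
    rewrite (W_vL r eta0' (whiskerR ka qq) (comp f pp) _ _ Q A Z ltac:(tc) Heta0' T1 Hr).
    assert (T2 : is2cell (whiskerL r eta0') (comp r (comp f pp)) (comp r (comp k0 qq))) by tc.
    assert (T3 : is2cell (whiskerL r (whiskerR ka qq)) (comp r (comp k0 qq)) (comp r (comp k' qq))) by tc.
    rewrite <- (E_vassoc _ _ _ _ _ _ _ Hchipp T2 T3), Heq.
    assert (T4 : is2cell (whiskerR eta0 qq) (comp i0 qq) (comp r (comp k0 qq))) by (apply thq; auto).
    rewrite (E_vassoc _ _ _ _ _ _ _ Hlam0 T4 T3).
    assert (T5 : is2cell (whiskerL r ka) (comp r k0) (comp r k')) by tc.
    rewrite (W_vR qq eta0 (whiskerL r ka) i0 _ _ Q X Z Hi0 Heta0 T5 Hqq).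
    rewrite (W_LR r ka qq k0 k' Q X A Z Hka Hk0 Hr Hqq). reflexivity.
Qed.

Lemma Gen : LeftLift i0 k0 r eta0 <-> LeftExt (comp f pp) qq k0 eta0'.
Proof.
  assert (HR0 : RR k0 eta0 eta0') by (split; [|split]; auto).
  split.
  - intros LL k' Hk' b Hb.
    assert (Hk : is1cell k' X A).
    { destruct Hqq as [_ E1]. destruct Hk0 as [_ E2]. rewrite E1, E2 in Hk'. exact Hk'. }
    destruct (bR k' b Hk Hb) as [th Hth].
    assert (Hk'' : is1cell k' (dom k0) (cod k0)).
    { destruct Hk0 as [-> ->]. exact Hk. }
    destruct (LL k' Hk'' th (proj1 Hth)) as [ka [[Hka E] U]].
    exists ka. split; [split; [exact Hka|]|].
    + pose proof (eR k' ka Hk Hka) as H. rewrite E in H. eapply dR; eauto.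
    + intros ka1 [Hka1 E1]. apply U. split; [exact Hka1|].
      pose proof (eR k' ka1 Hk Hka1) as H. rewrite E1 in H. eapply cR; eauto.
  - intros LE k' Hk' th Hth.
    assert (Hk : is1cell k' X A).
    { destruct Hk0 as [E1 E2]. rewrite E1, E2 in Hk'. exact Hk'. }
    destruct (aR k' th Hk Hth) as [ze Hze].
    assert (Hk'' : is1cell k' (cod qq) (cod k0)).
    { destruct Hk0 as [_ ->]. destruct Hqq as [_ ->]. exact Hk. }
    destruct (LE k' Hk'' ze (proj1 (proj2 Hze))) as [ka [[Hka E] U]].
    exists ka. split; [split; [exact Hka|]|].
    + pose proof (eR k' ka Hk Hka) as H. rewrite E in H. eapply cR; eauto.
    + intros ka1 [Hka1 E1]. apply U. split; [exact Hka1|].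
      pose proof (eR k' ka1 Hk Hka1) as H. rewrite E1 in H. eapply dR; eauto.
Qed.
End Gen.
Lemma HeqC {K : TwoCat} (y r f i k p q c p' q' : Mor K) (chi lam eta eta' lam' : Cell K)
  (C Z A M P X P' : Ob K) :
  is1cell y C Z -> is1cell r A Z -> is1cell f C A -> is1cell i M Z -> is1cell k M A ->
  is1cell p P C -> is1cell q P M -> is1cell c X M -> is1cell p' P' P -> is1cell q' P' X ->
  is2cell chi y (comp r f) -> is2cell lam (comp y p) (comp i q) ->
  is2cell eta i (comp r k) -> is2cell eta' (comp f p) (comp k q) ->
  is2cell lam' (comp q p') (comp c q') ->
  vcomp (whiskerL r eta') (whiskerR chi p) = vcomp (whiskerR eta q) lam ->
  vcomp (whiskerL r (vcomp (whiskerL k lam') (whiskerR eta' p'))) (whiskerR chi (comp p p'))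
  = vcomp (whiskerR (whiskerR eta c) q') (vcomp (whiskerL i lam') (whiskerR lam p')).
Proof.
  intros Hy Hr Hf Hi Hk Hp Hq Hc Hp' Hq' Hchi Hlam Heta Heta' Hlam' Heq.
  assert (Ta1 : is2cell (whiskerR eta' p') (comp (comp f p) p') (comp k (comp q p'))).
  { eapply t_conv; [eapply t_wR; [exact Heta'| tc | exact Hp'] | reflexivity |].
    symmetry. eapply E_assoc; tc. }
  assert (Ta2 : is2cell (whiskerL k lam') (comp k (comp q p')) (comp k (comp c q'))) by tc.
  rewrite (W_vL r _ _ (comp (comp f p) p') (comp k (comp q p')) (comp k (comp c q')) P' A Z
             ltac:(tc) Ta1 Ta2 Hr).
  assert (Tc : is2cell (whiskerR chi (comp p p')) (comp y (comp p p')) (comp r (comp (comp f p) p'))).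
  { eapply t_conv; [eapply t_wR; [exact Hchi| tc | tc] | reflexivity |].
    rewrite <- (E_assoc (comp p p') f r P' C A Z ltac:(tc) Hf Hr).
    f_equal. eapply E_assoc; tc. }
  assert (Tr1 : is2cell (whiskerL r (whiskerR eta' p')) (comp r (comp (comp f p) p'))
                  (comp r (comp k (comp q p')))) by tc.
  assert (Tr2 : is2cell (whiskerL r (whiskerL k lam')) (comp r (comp k (comp q p')))
                  (comp r (comp k (comp c q')))) by tc.
  rewrite <- (E_vassoc _ _ _ _ _ _ _ Tc Tr1 Tr2).
  assert (E : vcomp (whiskerL r (whiskerR eta' p')) (whiskerR chi (comp p p'))
            = vcomp (whiskerR eta (comp q p')) (whiskerR lam p')).
  { rewrite <- (W_LR r eta' p' (comp f p) (comp k q) P' P A Z Heta' ltac:(tc) Hr Hp').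
    rewrite <- (W_RR chi p p' y (comp r f) P' P C Z Hchi Hy Hp Hp').
    assert (Tcp : is2cell (whiskerR chi p) (comp y p) (comp r (comp f p))).
    { eapply t_conv; [eapply t_wR; [exact Hchi| tc | exact Hp] | reflexivity |].
      symmetry. eapply E_assoc; tc. }
    assert (Trp : is2cell (whiskerL r eta') (comp r (comp f p)) (comp r (comp k q))) by tc.
    rewrite <- (W_vR p' (whiskerR chi p) (whiskerL r eta') (comp y p) _ _ P' P Z ltac:(tc) Tcp Trp Hp').
    rewrite Heq.
    assert (Teq : is2cell (whiskerR eta q) (comp i q) (comp (comp r k) q)) by tc.
    rewrite (W_vR p' lam (whiskerR eta q) (comp y p) _ _ P' P Z ltac:(tc) Hlam Teq Hp').
    rewrite (W_RR eta q p' i (comp r k) P' P M Z Heta Hi Hq Hp'). reflexivity. }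
  rewrite E.
  assert (Tlp : is2cell (whiskerR lam p') (comp (comp y p) p') (comp i (comp q p'))).
  { eapply t_conv; [eapply t_wR; [exact Hlam| tc | exact Hp'] | reflexivity |].
    symmetry. eapply E_assoc; tc. }
  assert (Teqp : is2cell (whiskerR eta (comp q p')) (comp i (comp q p')) (comp (comp r k) (comp q p'))) by tc.
  assert (Tr2' : is2cell (whiskerL r (whiskerL k lam')) (comp (comp r k) (comp q p'))
                  (comp r (comp k (comp c q')))).
  { eapply t_conv; [exact Tr2| |reflexivity]. eapply E_assoc; tc. }
  rewrite (E_vassoc _ _ _ _ _ _ _ Tlp Teqp Tr2').
  rewrite (W_LL r k lam' (comp q p') (comp c q') P' M A Z Hlam' ltac:(tc) Hk Hr).
  rewrite (Exch lam' eta (comp q p') (comp c q') i (comp r k) P' M Z Hlam' ltac:(tc) Heta Hi).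
  rewrite (W_RR eta c q' i (comp r k) P' X M Z Heta Hi Hc Hq').
  assert (Til : is2cell (whiskerL i lam') (comp i (comp q p')) (comp i (comp c q'))) by tc.
  assert (Tec : is2cell (whiskerR eta (comp c q')) (comp i (comp c q')) (comp (comp r k) (comp c q'))) by tc.
  rewrite (E_vassoc _ _ _ _ _ _ _ Tlp Til Tec). reflexivity.
Qed.

Theorem lemma3p13 (K : TwoCat) (Y : GoodYoneda K) (C M A P : Ob K)
  (i f k p q : Mor K) (lam eta eta' : Cell K) :
  finitely_complete K ->
  small Y C ->
  is1cell i M (PP Y C) -> is1cell f C A ->
  adm_ob Y M -> adm Y f ->
  is_comma (yon Y C) i P p q lam ->
  is1cell k M A ->
  is2cell eta i (comp (res Y f) k) ->
  is2cell eta' (comp f p) (comp k q) ->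
  vcomp (whiskerL (res Y f) eta') (whiskerR (chi Y f) p)
    = vcomp (whiskerR eta q) lam ->
  (LeftLift i k (res Y f) eta <-> LeftExt (comp f p) q k eta') /\
  (AbsLeftLift i k (res Y f) eta <-> PointwiseLeftExt (comp f p) q k eta').
Proof.
  intros Hfc [HC HPC] Hi Hf HM Hfa Hcm Hk Heta Heta' Heq.
  unfold adm_ob in *.
  assert (HdC : dom f = C) by (destruct Hf; auto).
  assert (HCf : adm Y (idm (dom f))) by (rewrite HdC; exact HC).
  set (Z := PP Y C).
  assert (Hy : is1cell (yon Y C) C Z) by (apply yon_typ; exact HC).
  assert (Hr : is1cell (res Y f) A Z).
  { pose proof (res_typ Y f HCf Hfa) as H. rewrite HdC in H. destruct Hf as [_ Hcf].
    rewrite Hcf in H. exact H. }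
  assert (Hchi : is2cell (chi Y f) (yon Y C) (comp (res Y f) f)).
  { pose proof (chi_typ Y f HCf Hfa) as H. rewrite HdC in H. exact H. }
  assert (Y1 : forall j D, is1cell j D C ->
     LeftLift (comp (yon Y C) j) (comp f j) (res Y f) (whiskerR (chi Y f) j)).
  { intros j D [_ Hj]. pose proof (yoneda_i Y f HCf Hfa) as H. rewrite HdC in H.
    apply H. rewrite Hj, HdC. reflexivity. }
  assert (HdY : dom (yon Y C) = C) by (destruct Hy; auto).
  assert (Y2 : PointwiseLeftExt (yon Y C) (yon Y C) (idm Z) (idc (yon Y C))).
  { pose proof (@yoneda_ii K Y (yon Y C) (idm Z) (idc (yon Y C))) as H.
    rewrite HdY in H. apply H; clear H.
    - exact HC.
    - apply yon_adm; exact HC.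
    - destruct Hy as [_ ->]. apply t_idm.
    - rewrite (E_idl _ _ _ Hy). apply t_idc.
    - intros j Hj k' Hk' b Hb.
      assert (Hj' : is1cell j (dom j) C) by (split; [reflexivity| rewrite Hj; auto]).
      assert (Hyj : is1cell (comp (yon Y C) j) (dom j) Z) by tc.
      assert (Hk'' : is1cell k' (dom j) Z).
      { destruct Hyj as [E1 E2]. rewrite E1, E2 in Hk'. exact Hk'. }
      rewrite (E_idl _ _ _ Hk'') in Hb.
      rewrite (W_Rid j (yon Y C) (dom j) C Z Hy Hj').
      exists b. split.
      + split; [exact Hb|]. rewrite (W_Lidm b _ _ _ _ Hb Hyj). eapply E_vidr; eauto.
      + intros x [Hx E]. rewrite (W_Lidm x _ _ _ _ Hx Hyj) in E.
        rewrite (E_vidr _ _ _ Hx) in E. auto. }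
  assert (Y3 : forall c X P'' p'' q'' lam'', is1cell c X Z ->
            is_comma (yon Y C) c P'' p'' q'' lam'' -> LeftExt (comp (yon Y C) p'') q'' c lam'').
  { intros c X P'' p'' q'' lam'' Hc Hcm''.
    assert (Hc' : is1cell c X (cod (yon Y C))) by (destruct Hy as [_ ->]; exact Hc).
    pose proof (Y2 X c Hc' P'' p'' q'' lam'' Hcm'') as H.
    destruct Hcm'' as [_ [Hp'' [_ [Hl'' _]]]]. rewrite HdY in Hp''.
    rewrite (E_idl _ _ _ Hc) in H.
    rewrite (W_Rid p'' (yon Y C) _ C Z Hy Hp'') in H.
    assert (Hyp : is1cell (comp (yon Y C) p'') P'' Z) by tc.
    rewrite (W_Lidm _ _ _ _ _ Hl'' Hyp) in H.
    rewrite (E_vidr _ _ _ Hl'') in H. exact H. }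
  pose proof Hcm as Hcm0.
  destruct Hcm0 as [_ [Hp [Hq [Hlam _]]]]. rewrite HdY in Hp.
  assert (HdI : dom i = M) by (destruct Hi; auto). rewrite HdI in Hq.
  split.
  - exact (Gen (yon Y C) (res Y f) f i k p q (chi Y f) lam eta eta' C Z A M P Hy Hr Hf Hchi Y1 Hi Hk Hp Hq Hlam (Y3 i M P p q lam Hi Hcm) Heta Heta' Heq).
  - destruct Hfc as [_ [_ Hcom]].
    assert (Key : forall X c P' p' q' lam', is1cell c X M -> is_comma q c P' p' q' lam' ->
      (LeftLift (comp i c) (comp k c) (res Y f) (whiskerR eta c) <->
       LeftExt (comp (comp f p) p') q' (comp k c) (vcomp (whiskerL k lam') (whiskerR eta' p')))).
    { intros X c P' p' q' lam' Hc Hcm'.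
      pose proof Hcm' as Hcm1. destruct Hcm1 as [_ [Hp' [Hq' [Hlam' _]]]].
      assert (Hdq : dom q = P) by (destruct Hq; auto). rewrite Hdq in Hp'.
      assert (Hdc : dom c = X) by (destruct Hc; auto). rewrite Hdc in Hq'.
      rewrite <- (E_assoc p' p f P' P C A Hp' Hp Hf).
      assert (Hic : is1cell (comp i c) X Z) by tc.
      assert (Ex : exists P'' p'' q'' lam'', is_comma (yon Y C) (comp i c) P'' p'' q'' lam'').
      { apply Hcom. destruct Hy as [_ ->]. destruct Hic as [_ ->]. reflexivity. }
      pose proof (Star (yon Y C) i c p q p' q' lam lam' C Z M X P P' Hy Hi Hc Ex
                   (fun P'' p'' q'' lam'' H => Y3 (comp i c) X P'' p'' q'' lam'' Hic H) Hcm Hcm') as LE0.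
      assert (HL : is2cell (vcomp (whiskerL i lam') (whiskerR lam p'))
                      (comp (yon Y C) (comp p p')) (comp (comp i c) q')).
      { eapply t_vcomp.
        - eapply t_conv; [eapply t_wR; [exact Hlam| tc | exact Hp'] | |].
          + symmetry; eapply E_assoc; tc.
          + symmetry; eapply E_assoc; tc.
        - eapply t_conv; [eapply t_wL; [exact Hlam'| tc | exact Hi] | |].
          + reflexivity.
          + eapply E_assoc; tc. }
      assert (Hetac : is2cell (whiskerR eta c) (comp i c) (comp (res Y f) (comp k c))).
      { eapply t_conv; [eapply t_wR; [exact Heta| tc | exact Hc] | reflexivity |].
        symmetry; eapply E_assoc; tc. }
      assert (Heta0' : is2cell (vcomp (whiskerL k lam') (whiskerR eta' p'))
                  (comp f (comp p p')) (comp (comp k c) q')).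
      { eapply t_vcomp.
        - eapply t_conv; [eapply t_wR; [exact Heta'| tc | exact Hp'] | |].
          + symmetry; eapply E_assoc; tc.
          + symmetry; eapply E_assoc; tc.
        - eapply t_conv; [eapply t_wL; [exact Hlam'| tc | exact Hk] | |].
          + reflexivity.
          + eapply E_assoc; tc. }
      pose proof (HeqC (yon Y C) (res Y f) f i k p q c p' q' (chi Y f) lam eta eta' lam'
                    C Z A M P X P' Hy Hr Hf Hi Hk Hp Hq Hc Hp' Hq' Hchi Hlam Heta Heta' Hlam' Heq) as HE.
      exact (Gen (yon Y C) (res Y f) f (comp i c) (comp k c) (comp p p') q' (chi Y f) _
               (whiskerR eta c) _ C Z A X P' Hy Hr Hf Hchi Y1 Hic ltac:(tc) ltac:(tc) Hq' HL LE0
               Hetac Heta0' HE). }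
    split.
    + intros Abs X c Hc P' p' q' lam' Hcm'.
      assert (Hc' : is1cell c X M) by (destruct Hq as [_ E]; rewrite E in Hc; exact Hc).
      apply (proj1 (Key X c P' p' q' lam' Hc' Hcm')).
      apply Abs. destruct Hc' as [_ ->]. destruct Hk as [-> _]. reflexivity.
    + intros PW j Hj.
      assert (Hc' : is1cell j (dom j) M) by (split; [reflexivity| rewrite Hj; destruct Hk; auto]).
      destruct (Hcom q j) as [P' [p' [q' [lam' Hcm']]]].
      { destruct Hq as [_ ->]. destruct Hc' as [_ ->]. reflexivity. }
      apply (proj2 (Key (dom j) j P' p' q' lam' Hc' Hcm')).
      assert (Hc'' : is1cell j (dom j) (cod q)) by (destruct Hq as [_ ->]; exact Hc').
      exact (PW (dom j) j Hc'' P' p' q' lam' Hcm').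
Qed.
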